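(* Let $P(X_1,\ldots,X_n)$ be a polynomial over $\mathbb{C}$ which is symmetric in $X_1,\ldots,X_n$. Then $$P(E_{k_1},\ldots,E_{k_n})\prod_{1\le i<j\le n}\frac{k_j-k_i}{j-i}=P(1,\ldots,1)\cdot\prod_{1\le i<j\le n}\frac{k_j-k_i}{j-i}.$$
   Context: $E_{k_j}$ denotes the shift operator in the variable $k_j$ acting on $\mathbb{C}[k_1,\ldots,k_n]$, $E_{k_j}F(\ldots,k_j,\ldots)=F(\ldots,k_j+1,\ldots)$; since these commute, $P(E_{k_1},\ldots,E_{k_n})$ is a well-defined operator (products are compositions, and $1$ corresponds to the identity). *)

(* Defs.v *)
From HB Require Import structures.
From mathcomp Require Import all_boot all_algebra.
From mathcomp Require Import mpoly.
From mathcomp Require Import complex.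
From mathcomp Require Import Rstruct.
Set Implicit Arguments. Unset Strict Implicit. Unset Printing Implicit Defensive.
Import GRing.Theory.
Local Open Scope ring_scope.

Definition CC : numClosedFieldType := complex Rdefinitions.R.

(* Shift by a multi-exponent m : F(k_1,...,k_n) |-> F(k_1+m_1,...,k_n+m_n),
   i.e. the operator E_{k_1}^{m_1} ... E_{k_n}^{m_n}. *)
Definition shift_mpoly (n : nat) (m : 'X_{1..n}) (F : {mpoly CC[n]}) : {mpoly CC[n]} :=
  F \mPo [tuple 'X_i + ((m i)%:R)%:MP | i < n].

(* P(E_{k_1},...,E_{k_n}) applied to F : for P = sum_m c_m X^m,
   P(E) F = sum_m c_m E^m F. *)
Definition shift_op (n : nat) (P F : {mpoly CC[n]}) : {mpoly CC[n]} :=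
  \sum_(m <- msupp P) P@_m *: shift_mpoly m F.

(* prod_{1 <= i < j <= n} (k_j - k_i)/(j - i), indices shifted to 0..n-1. *)
Definition vdm_normalized (n : nat) : {mpoly CC[n]} :=
  \prod_(i < n) \prod_(j < n | (i < j)%N)
     (('X_j - 'X_i) * ((((j - i)%N)%:R : CC)^-1)%:MP).

(* Main.v *)
Require Import Defs.
From HB Require Import structures.
From mathcomp Require Import all_boot all_algebra.
From mathcomp Require Import mpoly.
From mathcomp Require Import fingroup perm.
Set Implicit Arguments. Unset Strict Implicit. Unset Printing Implicit Defensive.
Import GRing.Theory Num.Theory.
Local Open Scope ring_scope.

Section Main.
Variable n : nat.
Local Notation MP := {mpoly CC[n]}.
Definition Bc (c : CC) (l j : 'I_n) : CC := ('C(j, l))%:R * c ^+ (j - l).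
Definition Hd (f : {ffun 'I_n -> 'I_n}) (c : 'I_n -> CC) : CC :=
  \det (\matrix_(i, j) Bc (c i) (f i) j).

Lemma binom_exp (x : MP) (c : CC) (j : 'I_n) :
  (x + c%:MP) ^+ j = \sum_(l < n) x ^+ l * (Bc c l j)%:MP.
Proof.
rewrite addrC exprDn (big_ord_widen n (fun i : nat => (c%:MP ^+ (j - i) * x ^+ i) *+ 'C(j, i)) (ltn_ord j)) big_mkcond /=.
apply: eq_bigr => l _; case: ifP => hl.
  rewrite /Bc rmorphM rmorphXn /= rmorph_nat -mulr_natl.
  by rewrite [_ * x ^+ l]mulrC mulrCA.
rewrite /Bc bin_small ?mul0r ?mulr0 //.
by rewrite ltnNge -ltnS hl.
Qed.

Lemma Hd_ext (f : {ffun 'I_n -> 'I_n}) (c1 c2 : 'I_n -> CC) : c1 =1 c2 -> Hd f c1 = Hd f c2.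
Proof. by move=> e; rewrite /Hd; congr (\det _); apply/matrixP => i j; rewrite !mxE e. Qed.

Lemma Hd_perm (f : {ffun 'I_n -> 'I_n}) (c : 'I_n -> CC) (s : 'S_n) :
  Hd [ffun i => f (s i)] (fun i => c (s i)) = (-1) ^+ s * Hd f c.
Proof.
rewrite /Hd.
have -> : \matrix_(i, j) Bc (c (s i)) ([ffun i => f (s i)] i) j =
   row_perm s (\matrix_(i, j) Bc (c i) (f i) j).
  by apply/matrixP => i j; rewrite !mxE ffunE.
by rewrite row_permE det_mulmx det_perm.
Qed.

Lemma Hd_id (c : 'I_n -> CC) : Hd [ffun i => i] c = 1.
Proof.
rewrite /Hd -det_tr det_trig.
  apply: big1 => i _; rewrite !mxE ffunE /Bc binn subnn expr0 mulr1 //.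
apply/is_trig_mxP => i j hij; rewrite !mxE ffunE /Bc bin_small ?mul0r //.
Qed.


Lemma det_expand (R : comRingType) m (a : 'I_m -> 'I_m -> R) (b : 'I_m -> 'I_m -> 'I_m -> R) :
  \det (\matrix_(i, j) \sum_(l < m) a i l * b i l j) =
  \sum_(f : {ffun 'I_m -> 'I_m}) (\prod_i a i (f i)) * \det (\matrix_(i, j) b i (f i) j).
Proof.
rewrite /determinant.
under eq_bigr => s _ do under eq_bigr => i _ do rewrite mxE.
under eq_bigr => s _ do rewrite bigA_distr_bigA big_distrr /=.
rewrite exchange_big /=; apply: eq_bigr => f _.
rewrite big_distrr /=; apply: eq_bigr => s _.
rewrite mulrCA; congr (_ * _).
rewrite -big_split /=; apply: eq_bigr => i _; by rewrite mxE.
Qed.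

Definition Mx : 'M[MP]_n := \matrix_(i, j) 'X_i ^+ j.

Lemma det_shift (c : 'I_n -> CC) :
  \det (\matrix_(i, j) ('X_i + (c i)%:MP) ^+ j : 'M[MP]_n) =
  \sum_(f : {ffun 'I_n -> 'I_n}) (\prod_i 'X_i ^+ f i) * (Hd f c)%:MP.
Proof.
have -> : \matrix_(i, j) ('X_i + (c i)%:MP) ^+ j =
   \matrix_(i, j) \sum_(l < n) ('X_i ^+ l : MP) * (Bc (c i) l j)%:MP.
  by apply/matrixP => i j; rewrite !mxE binom_exp.
rewrite det_expand; apply: eq_bigr => f _; congr (_ * _).
rewrite /Hd -det_map_mx; congr (\det _); apply/matrixP => i j; by rewrite !mxE.
Qed.

Lemma det_Mx : \det Mx = \sum_(f : {ffun 'I_n -> 'I_n}) (\prod_i 'X_i ^+ f i) * (Hd f (fun _ => 0))%:MP.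
Proof.
rewrite -det_shift; congr (\det _); apply/matrixP => i j; by rewrite !mxE addr0.
Qed.

Lemma shift_Mx (m : 'X_{1..n}) :
  shift_mpoly m (\det Mx) =
  \sum_(f : {ffun 'I_n -> 'I_n}) (\prod_i 'X_i ^+ f i) * (Hd f (fun i => (m i)%:R))%:MP.
Proof.
rewrite -det_shift /shift_mpoly -det_map_mx; congr (\det _).
apply/matrixP => i j; rewrite !mxE rmorphXn /= comp_mpolyXU -tnth_nth tnth_mktuple //.
Qed.

Definition kappa : CC := \prod_(i < n) \prod_(j < n | (i < j)%N) (((j - i)%N)%:R : CC)^-1.

Lemma vdm_eq : vdm_normalized n = \det Mx * kappa%:MP.
Proof.
have -> : \det Mx = \det (Vandermonde n (\row_j ('X_j : MP))).
  rewrite -det_tr; congr (\det _); apply/matrixP => i j; by rewrite !mxE.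
rewrite /vdm_normalized /kappa det_Vandermonde rmorph_prod -big_split /=.
apply: eq_bigr => i _.
rewrite rmorph_prod -big_split /=; apply: eq_bigr => j _; by rewrite !mxE.
Qed.

Lemma reindex (P : MP) (s : 'S_n) (F : 'X_{1..n} -> CC) : P \is symmetric ->
  \sum_(m <- msupp P) P@_m * F m =
  \sum_(m <- msupp P) P@_m * F [multinom m (s i) | i < n].
Proof.
move=> sP.
have pe : perm_eq (msupp P) [seq [multinom m (s i) | i < n] | m : 'X_{1..n} <- msupp P].
  apply: uniq_perm; first exact: msupp_uniq.
    by rewrite map_inj_uniq ?msupp_uniq //; exact: mperm_inj.
  move=> m; apply/idP/mapP.
    move=> hm; exists [multinom m ((s^-1)%g i) | i < n].
      by rewrite issym_msupp.
    by rewrite (mpermK s m).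
  by case=> m' hm' ->; rewrite issym_msupp.
rewrite (perm_big _ pe) big_map; apply: eq_bigr => m _; by rewrite msym_coeff.
Qed.

Definition G (P : MP) (f : {ffun 'I_n -> 'I_n}) : CC :=
  \sum_(m <- msupp P) P@_m * Hd f (fun i => (m i)%:R).

Lemma G_perm (P : MP) (f : {ffun 'I_n -> 'I_n}) (s : 'S_n) : P \is symmetric ->
  G P [ffun i => f (s i)] = (-1) ^+ s * G P f.
Proof.
move=> sP; rewrite /G (reindex s (fun m => Hd [ffun i => f (s i)] (fun i => (m i)%:R)) sP).
rewrite big_distrr /=; apply: eq_bigr => m _.
rewrite mulrCA -Hd_perm (@Hd_ext _ _ (fun i => (m (s i))%:R)) // => i; by rewrite mnmE.
Qed.

Lemma self_opp (x : CC) : x = - x -> x = 0.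
Proof.
move=> h; have : x *+ 2 == 0 by rewrite mulr2n {2}h subrr.
by rewrite mulrn_eq0 /= => /eqP.
Qed.

Lemma G_eq (P : MP) (f : {ffun 'I_n -> 'I_n}) : P \is symmetric ->
  G P f = P.@[fun _ => 1] * Hd f (fun _ => 0).
Proof.
move=> sP.
case: (boolP (injectiveb f)) => [/injectiveP finj | /injectivePn [x [y hxy hf]]].
  pose s := perm finj.
  pose g : {ffun 'I_n -> 'I_n} := [ffun k => k].
  have -> : f = [ffun i => g (s i)] by apply/ffunP => i; rewrite !ffunE permE.
  have H0 := Hd_perm g (fun _ => 0) s; simpl in H0; rewrite H0 G_perm //.
  rewrite Hd_id /G; under eq_bigr do rewrite Hd_id mulr1.
  rewrite mevalE.
  have E : \sum_(m <- msupp P) P@_m * \prod_i (1:CC) ^+ m i = \sum_(m <- msupp P) P@_m.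
    by apply: eq_bigr => m _; rewrite big1 ?mulr1 // => i _; rewrite expr1n.
  by rewrite E mulr1 mulrC.
pose t := tperm x y.
have ht : [ffun i => f (t i)] = f.
  by apply/ffunP => i; rewrite ffunE; case: tpermP => // ->.
have H1 := G_perm f t sP; rewrite ht odd_tperm hxy expr1 mulN1r in H1.
have H2 := Hd_perm f (fun _ => 0) t; simpl in H2.
rewrite ht odd_tperm hxy expr1 mulN1r in H2.
by rewrite (self_opp H1) (self_opp H2) mulr0.
Qed.

End Main.

Lemma shift_mul n (m : 'X_{1..n}) (D : {mpoly CC[n]}) (k : CC) :
  shift_mpoly m (D * k%:MP) = shift_mpoly m D * k%:MP.
Proof. by rewrite /shift_mpoly rmorphM /= comp_mpolyC. Qed.

Theorem lemma5 (n : nat) (P : {mpoly CC[n]}) :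
  P \is symmetric ->
  shift_op P (vdm_normalized n) = P.@[fun _ => 1] *: vdm_normalized n.
Proof.
move=> sP; rewrite vdm_eq /shift_op.
under eq_bigr => m _ do rewrite shift_mul shift_Mx scalerAl.
rewrite -mulr_suml scalerAl; congr (_ * _).
rewrite det_Mx scaler_sumr.
under eq_bigr => m _ do rewrite scaler_sumr.
rewrite exchange_big /=; apply: eq_bigr => f _.
rewrite scalerAr -mul_mpolyC -rmorphM -G_eq // /G rmorph_sum mulr_sumr.
apply: eq_bigr => m _; by rewrite rmorphM mul_mpolyC scalerAr.
Qed.
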